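(* Let $\mathcal{C}^1, \mathcal{C}^2 \subset \mathbb{R}^l$, $p^1 \neq p^2$, and the growth distance algorithm be as described in the context, producing lower bounds $\beta^l_k > 0$ and upper bounds $\beta^u_k \in (0, \infty]$ on the ray intersection value. Then the relative gap $\beta^u_k/\beta^l_k - 1$ is monotonically decreasing (non-increasing) in $k$ over the iterations executed by the algorithm.
   Context: A proper convex (PC) set is a compact convex subset of $\mathbb{R}^l$ with nonempty interior. For compact convex $\mathcal{C}$: $B_r(x)$ is the closed Euclidean ball; inradius $r(\mathcal{C}, x) = \max\{r \ge 0 : B_r(x) \subset \mathcal{C}\}$; support function $s_v[\mathcal{C}](\lambda) = \max_{z \in \mathcal{C}} \langle \lambda, z\rangle$; support point function $s_p[\mathcal{C}](\lambda)$ is any (arbitrary) selection from $\arg\max_{z \in \mathcal{C}}\langle \lambda, z\rangle$. Setting: $\mathcal{C}^1$ is a PC set, $\mathcal{C}^2 \ne \emptyset$ compact convex, $p^1 \in \operatorname{int}\mathcal{C}^1$, $p^2 \in \mathcal{C}^2$, $p^1 \ne p^2$, $\underline r = r(\mathcal{C}^1,p^1) + r(\mathcal{C}^2,p^2)$. Let $p = p^2 - p^1$ and $\mathcal{C} = \mathcal{C}^1 - \mathcal{C}^2 + \{p\}$, so $B_{\underline r}(0) \subset \mathcal{C}$; $s_v[\mathcal{C}](\lambda) = s_v[\mathcal{C}^1](\lambda) + s_v[\mathcal{C}^2](-\lambda) + \langle\lambda, p\rangle$, $s_p[\mathcal{C}](\lambda) = s_p[\mathcal{C}^1](\lambda) -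 s_p[\mathcal{C}^2](-\lambda) + p$. The ray intersection problem is: maximize $\beta$ subject to $z \in \mathcal{C}$, $z = \beta p$. Algorithm. Initialization ($k=0$): $M^o_0 = \emptyset$, $\beta^u_0 = \infty$; $M^i_0 = \{-l+1,\dots,0\}$; choose $l-1$ linearly independent unit vectors $p^\perp_m$ orthogonal to $p$ and set $z_m = K p^\perp_m + \epsilon p/\|p\|$ ($m=-l+1,\dots,-1$), $z_0 = l\epsilon p/\|p\| - \sum_{m=-l+1}^{-1} z_m$, with $\epsilon, K > 0$ such that $\|z_m\| \le \underline r$; $M^{i*}_0 = M^i_0$, $\beta^l_0 = \epsilon/\|p\|$, $\lambda_0 = p/\|p\|_\infty$. Iteration $k \ge 1$: $z_k = s_p[\mathcal{C}](\lambda_{k-1})$, $v_k = s_v[\mathcal{C}](\lambda_{k-1})$. Outer update: $M^o_k = \{m^*\}$ with $m^* \in \arg\min_{m \in M^o_{k-1}\cup\{k\}} v_m/\langle\lambda_{m-1},p\rangle$, and $\beta^u_k = \min\{\beta^u_{k-1}, v_k/\langle\lambda_{k-1},p\rangle\}$. Inner update: $M^i_k = M^i_{k-1}\cup\{k\}$; solve the LP $\min \sum_{m\in M^i_k}\nu_m$ s.t. $\sum_{m\in M^i_k}\nu_m z_m = p$, $\nu \ge 0$ by the primal Simplex method started from basis $M^{i*}_{k-1}$ (most-negative reduced cost entering rule, minimum-ratio leaving rule, Bland's anti-cycling rule), obtaining optimal basis $M^{i*}_k$ and optimal value $(\beta^l_k)^{-1}$; optionally prune $M^i_k$ to any subset containing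 $M^{i*}_k$; set $\lambda_k = Z^{-\top}\mathbf{1}$ with $Z = [z_{m_1}\cdots z_{m_l}]$, $\{m_1,\dots,m_l\} = M^{i*}_k$, then $\lambda_k \leftarrow \lambda_k/\|\lambda_k\|_\infty$. Stop when $\beta^u_k/\beta^l_k - 1 < \epsilon_{tol}$ or $k = K_{max}$. *)

(* Defs.v *)
From mathcomp Require Import all_boot all_order all_algebra.
From mathcomp Require Import all_classical all_reals all_analysis.
Import Order.TTheory GRing.Theory Num.Theory.
Import numFieldTopology.Exports numFieldNormedType.Exports.

Set Implicit Arguments.
Unset Strict Implicit.
Unset Printing Implicit Defensive.

Local Open Scope classical_set_scope.
Local Open Scope ring_scope.

Section GrowthDistance.
Variables (R : realType) (l : nat).
Notation vec := 'cV[R]_l.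

Definition dot (u v : vec) : R := \sum_(i < l) u i 0 * v i 0.
Definition enorm (u : vec) : R := Num.sqrt (dot u u).
Definition infnorm (u : vec) : R := \big[Num.max/0]_(i < l) `|u i 0|.

Definition cball (x : vec) (r : R) : set vec := [set y | enorm (y - x) <= r].

Definition compact_convex (C : set vec) : Prop :=
  compact C /\ @convex_set R vec C.

Definition PC_set (C : set vec) : Prop :=
  compact_convex C /\ (interior C !=set0).

Definition is_inradius (C : set vec) (x : vec) (r : R) : Prop :=
  0 <= r /\ cball x r `<=` C /\
  (forall r', 0 <= r' -> cball x r' `<=` C -> r' <= r).

Definition supp_val (C : set vec) (lam : vec) : R := sup [set dot lam z | z in C].

Definition is_supp_point (C : set vec) (lam : vec) (z : vec) : Prop :=
  C z /\ (forall y, C y -> dot lam y <= dot lam z).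

Definition supp_point_fun (C : set vec) (sp : vec -> vec) : Prop :=
  forall lam, is_supp_point C lam (sp lam).

Definition minkowski_C (C1 C2 : set vec) (p : vec) : set vec :=
  [set x | exists a b, C1 a /\ C2 b /\ x = a - b + p].

Definition init_idx : seq int := [seq (n%:Z - l%:Z + 1) | n <- iota 0 l].
Definition perp_idx : seq int := [seq (n%:Z - l%:Z + 1) | n <- iota 0 l.-1].

(* matrix Z = [z_{m_1} ... z_{m_l}] of a basis given as b : 'I_l -> int *)
Definition basis_mx (z : int -> vec) (b : 'I_l -> int) : 'M[R]_l :=
  \matrix_(i < l, j < l) z (b j) i 0.

Definition dual_vec (z : int -> vec) (b : 'I_l -> int) : vec :=
  let lam := invmx (basis_mx z b)^T *m const_mx 1 in (infnorm lam)^-1 *: lam.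

(* M* is an optimal basis of  min sum_{m in S} nu_m  s.t.
   sum_{m in S} nu_m z_m = p, nu >= 0, with optimal value v. *)
Definition optimal_basis (z : int -> vec) (p : vec) (S : pred int)
    (b : 'I_l -> int) (v : R) : Prop :=
  injective b /\ (forall j, S (b j)) /\
  basis_mx z b \in unitmx /\
  (let nuB := invmx (basis_mx z b) *m p in
   (forall j, 0 <= nuB j 0) /\
   v = \sum_(j < l) nuB j 0 /\
   (forall (s : seq int) (nu : int -> R),
       uniq s -> all S s -> (forall m, m \in s -> 0 <= nu m) ->
       \sum_(m <- s) nu m *: z m = p ->
       v <= \sum_(m <- s) nu m)).

(* Data: points z_m (m : int), dual vectors lam_k, support values v_k,
   outer sets M^o_k (None = empty, Some m = {m}), inner sets M^i_k,
   optimal bases M^{i*}_k, bounds beta^l_k (real) and beta^u_k (extended). *)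
Definition GD_run (C1 C2 : set vec) (p1 p2 : vec) (rl : R)
    (sp1 sp2 : vec -> vec) (eps K : R) (pperp : int -> vec) (N : nat)
    (z : int -> vec) (lam : nat -> vec) (v : nat -> R)
    (Mo : nat -> option nat) (Mi : nat -> pred int) (Mstar : nat -> 'I_l -> int)
    (betal : nat -> R) (betau : nat -> \bar R) : Prop :=
  let p := p2 - p1 in
  let ratio := fun m : nat => v m / dot (lam m.-1) p in
  (Mo 0 = None /\ betau 0 = +oo%E /\
      Mi 0 =i (fun m => m \in init_idx) /\
      (forall m, m \in perp_idx -> enorm (pperp m) = 1 /\ dot (pperp m) p = 0) /\
      (forall c : int -> R, \sum_(m <- perp_idx) c m *: pperp m = 0 ->
          forall m, m \in perp_idx -> c m = 0) /\
      0 < eps /\ 0 < K /\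
      (forall m, m \in perp_idx -> z m = K *: pperp m + (eps / enorm p) *: p) /\
      z 0 = (l%:R * eps / enorm p) *: p - \sum_(m <- perp_idx) z m /\
      (forall m, m \in init_idx -> enorm (z m) <= rl) /\
      (forall j : 'I_l, Mstar 0 j = init_idx`_j) /\
      betal 0 = eps / enorm p /\
      lam 0 = (infnorm p)^-1 *: p)
  /\
  (forall k : nat, (1 <= k <= N)%N ->
    let lamk := lam k.-1 in
    (z k%:Z = sp1 lamk - sp2 (- lamk) + p /\
        v k = supp_val (minkowski_C C1 C2 p) lamk /\
        (exists ms, [/\ Mo k = Some ms,
                       ms = k \/ Mo k.-1 = Some ms,
                       ratio ms <= ratio k &
                       forall m', Mo k.-1 = Some m' -> ratio ms <= ratio m']) /\
        betau k = Order.min (betau k.-1) (ratio k)%:E /\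
        optimal_basis z p (predU (Mi k.-1) (pred1 k%:Z)) (Mstar k) (betal k)^-1 /\
        (* optional pruning: M^{i*}_k subset M^i_k subset M^i_{k-1} u {k} *)
        (forall j, Mi k (Mstar k j)) /\
        (forall m, Mi k m -> Mi k.-1 m \/ m = k%:Z) /\
        lam k = dual_vec z (Mstar k))).

End GrowthDistance.

Definition rel_gap (R : realType) (bu : \bar R) (bl : R) : \bar R :=
  (bu * (bl^-1)%:E - 1%:E)%E.

(* Main.v *)
Require Import Defs.
From mathcomp Require Import all_boot all_order all_algebra.
From mathcomp Require Import all_classical all_reals all_analysis.
From mathcomp Require Import ring lra.
Import Order.TTheory GRing.Theory Num.Theory.
Import numFieldTopology.Exports numFieldNormedType.Exports.
Local Open Scope classical_set_scope.
Local Open Scope ring_scope.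

Section H.
Variables (R : realType) (l : nat).
Notation vec := 'cV[R]_l.

Lemma dotDr (u v w : vec) : dot u (v + w) = dot u v + dot u w.
Proof. by rewrite /dot -big_split; apply: eq_bigr => i _; rewrite mxE mulrDr. Qed.
Lemma dotNr (u v : vec) : dot u (- v) = - dot u v.
Proof. by rewrite /dot -sumrN; apply: eq_bigr => i _; rewrite mxE mulrN. Qed.
Lemma dotNl (u v : vec) : dot (- u) v = - dot u v.
Proof. by rewrite /dot -sumrN; apply: eq_bigr => i _; rewrite mxE mulNr. Qed.
Lemma dotZl (c : R) (u v : vec) : dot (c *: u) v = c * dot u v.
Proof. by rewrite /dot mulr_sumr; apply: eq_bigr => i _; rewrite mxE mulrA. Qed.
Lemma dot_ge0 (u : vec) : 0 <= dot u u.
Proof. by rewrite /dot sumr_ge0 // => i _; rewrite -expr2 sqr_ge0. Qed.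
Lemma infnorm_ge0 (u : vec) : 0 <= infnorm u.
Proof.
rewrite /infnorm; elim/big_rec: _ => // i x _ hx.
by rewrite le_max hx orbT.
Qed.

Lemma supp_val_ge0 C1 C2 (p1 p2 : vec) sp1 sp2 lam :
  C1 p1 -> C2 p2 -> supp_point_fun C1 sp1 -> supp_point_fun C2 sp2 ->
  0 <= supp_val (minkowski_C C1 C2 (p2 - p1)) lam.
Proof.
move=> h1 h2 s1 s2.
have -> : 0 = dot lam 0 by rewrite /dot big1 // => i _; rewrite mxE mulr0.
apply: sup_upper_bound; last first.
  exists 0 => //; exists p1, p2; split=> //; split=> //.
  by rewrite addrC addrA subrK subrr.
split; first by exists (dot lam 0); exists 0 => //; exists p1, p2; split=> //; split=> //;
  rewrite addrC addrA subrK subrr.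
exists (dot lam (sp1 lam) + dot (- lam) (sp2 (- lam)) + dot lam (p2 - p1)).
move=> _ [y [a [b [ha [hb ->]]]] <-].
rewrite !dotDr dotNr -dotNl lerD2r lerD //.
  by have [_ /(_ a ha)] := s1 lam.
by have [_ /(_ b hb)] := s2 (- lam).
Qed.

Lemma dual_dot (Z : 'M[R]_l) (p : vec) :
  dot (invmx Z^T *m const_mx 1) p = \sum_j (invmx Z *m p) j 0.
Proof.
rewrite /dot -trmx_inv.
under eq_bigr => i _ do rewrite !mxE mulr_suml.
rewrite exchange_big /=; apply: eq_bigr => j _.
rewrite [RHS]mxE; apply: eq_bigr => i _; rewrite !mxE mulr1 //.
Qed.

Lemma basis_feasible (z : int -> vec) (p : vec) (b : 'I_l -> int) :
  injective b -> basis_mx z b \in unitmx ->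
  let nuB := invmx (basis_mx z b) *m p in
  let nu := fun m => \sum_(j | b j == m) nuB j 0 in
  [/\ uniq (map b (enum 'I_l)),
      forall j, nu (b j) = nuB j 0,
      \sum_(m <- map b (enum 'I_l)) nu m *: z m = p &
      \sum_(m <- map b (enum 'I_l)) nu m = \sum_j nuB j 0].
Proof.
move=> binj bu nuB nu.
have hnu : forall j, nu (b j) = nuB j 0.
  move=> j; rewrite /nu (big_pred1 j) // => j' /=.
  by apply/eqP/eqP => [/binj|->].
split=> //; first by rewrite map_inj_uniq ?enum_uniq.
  rewrite big_map big_enum /=.
  under eq_bigr => j _ do rewrite hnu.
  apply/matrixP => i k; rewrite (ord1 k) summxE.
  rewrite -[in RHS](mulKVmx bu p) -/nuB mxE.
  by apply: eq_bigr => j _; rewrite !mxE mulrC.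
by rewrite big_map big_enum /=; apply: eq_bigr => j _; rewrite hnu.
Qed.

Lemma enorm_gt0 (p : vec) : p != 0 -> 0 < enorm p.
Proof.
move=> hp; rewrite /enorm sqrtr_gt0 lt_def dot_ge0 andbT.
apply: contra hp => h0; apply/eqP; apply/matrixP => i k; rewrite (ord1 k) mxE.
have h0' : dot p p = 0 by apply/eqP.
have hF : forall j : 'I_l, true -> 0 <= p j 0 * p j 0.
  by move=> j _; rewrite -expr2 sqr_ge0.
have := psumr_eq0P hF h0' (i:=i) isT.
by move=> h; apply/eqP; rewrite -[_ == _]orbb -mulf_eq0 h.
Qed.

Lemma init_split : (0 < l)%N -> init_idx l = rcons (perp_idx l) 0.
Proof.
case: l => // n _; rewrite /init_idx /perp_idx.
have -> : iota 0 n.+1 = iota 0 n ++ [:: n] by rewrite -addn1 iotaD.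
rewrite map_cat cats1 /=.
congr rcons; rewrite -addn1 PoszD; lra.
Qed.

Lemma init_uniq : uniq (init_idx l).
Proof.
rewrite /init_idx map_inj_uniq ?iota_uniq // => x y /addIr/addIr.
by move=> /eqP; rewrite eqz_nat => /eqP.
Qed.

Lemma size_init : size (init_idx l) = l.
Proof. by rewrite size_map size_iota. Qed.
End H.

Theorem theorem2 (R : realType) (l : nat)
    (C1 C2 : set 'cV[R]_l) (p1 p2 : 'cV[R]_l) (r1 r2 : R)
    (sp1 sp2 : 'cV[R]_l -> 'cV[R]_l) (eps K : R) (pperp : int -> 'cV[R]_l)
    (N : nat) (z : int -> 'cV[R]_l) (lam : nat -> 'cV[R]_l) (v : nat -> R)
    (Mo : nat -> option nat) (Mi : nat -> pred int)
    (Mstar : nat -> 'I_l -> int) (betal : nat -> R) (betau : nat -> \bar R) :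
  PC_set C1 -> compact_convex C2 -> C2 !=set0 ->
  interior C1 p1 -> C2 p2 -> p1 != p2 ->
  is_inradius C1 p1 r1 -> is_inradius C2 p2 r2 ->
  supp_point_fun C1 sp1 -> supp_point_fun C2 sp2 ->
  GD_run C1 C2 p1 p2 (r1 + r2) sp1 sp2 eps K pperp N
         z lam v Mo Mi Mstar betal betau ->
  forall k : nat, (1 <= k <= N)%N ->
    (rel_gap (betau k) (betal k) <= rel_gap (betau k.-1) (betal k.-1))%E.
Proof.
move=> _ _ _ /interior_subset hp1 hp2 hneq _ _ hs1 hs2.
rewrite /GD_run /=.
move=> [[Mo0 [bu0 [Mi0 [hperp [hlin [heps [hK [hzperp [hz0 [hzr [hM0 [bl0 lam0]]]]]]]]]]]] Iter].
have hpn : p2 - p1 != 0 by rewrite subr_eq0 eq_sym.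
have hl : (0 < l)%N.
  case: l p1 p2 hneq {hpn Iter Mi0 hperp hlin hzperp hz0 hzr hM0 bl0 lam0 hs1 hs2 hp1 hp2 C1 C2 sp1 sp2 pperp z lam Mstar} => // p1 p2.
  by rewrite !flatmx0 eqxx.
have hnp := @enorm_gt0 _ _ _ hpn.
have OB : forall j, (0 < j <= N)%N ->
  [/\ injective (Mstar j), basis_mx z (Mstar j) \in unitmx,
      forall i, 0 <= (invmx (basis_mx z (Mstar j)) *m (p2 - p1)) i 0,
      (betal j)^-1 = \sum_i (invmx (basis_mx z (Mstar j)) *m (p2 - p1)) i 0 &
      forall (s : seq int) (nu : int -> R),
       uniq s -> all (predU (Mi j.-1) (pred1 j%:Z)) s -> (forall m, m \in s -> 0 <= nu m) ->
       \sum_(m <- s) nu m *: z m = p2 - p1 ->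
       (betal j)^-1 <= \sum_(m <- s) nu m].
  move=> j hj; have [_ [_ [_ [_ [hob _]]]]] := Iter j hj.
  by move: hob => [hi [_ [hu [hn [hv hopt]]]]]; split.
have Dot : forall j, (j <= N)%N -> 0 <= dot (lam j) (p2 - p1).
  move=> [|j] hj.
    by rewrite lam0 dotZl mulr_ge0 ?invr_ge0 ?infnorm_ge0 ?dot_ge0.
  have hj' : (0 < j.+1 <= N)%N by rewrite hj.
  have [_ [_ [_ [_ [_ [_ [_ ->]]]]]]] := Iter _ hj'.
  have [_ _ hn _ _] := OB _ hj'.
  rewrite /dual_vec /= dotZl mulr_ge0 ?invr_ge0 ?infnorm_ge0 //.
  by rewrite dual_dot sumr_ge0.
have Rat : forall j, (0 < j <= N)%N -> 0 <= v j / dot (lam j.-1) (p2 - p1).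
  move=> j hj; have [_ [-> _]] := Iter j hj.
  apply: divr_ge0; first exact: (@supp_val_ge0 R l C1 C2 p1 p2 sp1 sp2 _ hp1 hp2 hs1 hs2).
  apply: Dot.
  by case/andP: hj => _; apply: leq_trans; apply: leq_pred.
have Bu : forall j, (j <= N)%N -> (0 <= betau j)%E.
  elim=> [|j IH] hj; first by rewrite bu0.
  have hj' : (0 < j.+1 <= N)%N by rewrite hj.
  have [_ [_ [_ [-> _]]]] := Iter _ hj'.
  by rewrite le_min IH ?(ltnW hj) //= lee_fin Rat.
have Bl : forall j, (j <= N)%N -> 0 <= (betal j)^-1.
  move=> [|j] hj.
    by rewrite bl0 invr_ge0 divr_ge0 ?(ltW heps) ?(ltW hnp).
  have hj' : (0 < j.+1 <= N)%N by rewrite hj.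
  have [_ _ hn -> _] := OB _ hj'.
  by rewrite sumr_ge0.
have Inv : forall k, (0 < k <= N)%N -> (betal k)^-1 <= (betal k.-1)^-1.
  move=> [|[|j]] // hk.
    have [_ _ _ _ hopt] := OB _ hk.
    pose c := enorm (p2 - p1) / (l%:R * eps).
    have hl0 : (l%:R : R) != 0 by rewrite pnatr_eq0 -lt0n.
    have -> : (betal 0)^-1 = \sum_(m <- init_idx l) (fun _ => c) m.
      rewrite bl0 big_const_seq count_predT size_init iter_addr_0 /c.
      rewrite -mulr_natr; field.
      by rewrite hl0 (gt_eqF heps) (gt_eqF hnp).
    apply: hopt.
    - exact: init_uniq.
    - by apply/allP => m hm /=; have h := Mi0 m; rewrite -[Mi 0 m]/(m \in Mi 0) h; apply/orP; left; exact: hm.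
    - by move=> m _; rewrite /c divr_ge0 ?(ltW hnp) // mulr_ge0 ?ler0n ?(ltW heps).
    rewrite -scaler_sumr (init_split _ hl) big_rcons /= hz0 addrC subrK scalerA /c.
    rewrite [X in X *: _](_ : _ = 1) ?scale1r //; field.
    by rewrite hl0 (gt_eqF heps) (gt_eqF hnp).
  have hk' : (0 < j.+1 <= N)%N by case/andP: hk => _ /ltnW ->.
  have [_ _ _ _ hopt] := OB _ hk.
  have [hinj hu hn -> _] := OB _ hk'.
  have [_ [_ [_ [_ [_ [hMi _]]]]]] := Iter _ hk'.
  have [hun hnu hsum hsum'] := @basis_feasible _ _ z (p2 - p1) _ hinj hu.
  rewrite -hsum'; apply: hopt => //.
  - by apply/allP => m /mapP [i _ ->] /=; apply/orP; left; exact: hMi.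
  - by move=> m /mapP [i _ ->]; rewrite hnu.
move=> k hk.
have hkN : (k <= N)%N by case/andP: hk.
have hk1 : (k.-1 <= N)%N by apply: leq_trans hkN; apply: leq_pred.
rewrite /rel_gap; apply: leeB => //.
apply: lee_pmul.
- exact: Bu.
- by rewrite lee_fin Bl.
- have [_ [_ [_ [-> _]]]] := Iter _ hk.
  by rewrite ge_min lexx.
- by rewrite lee_fin Inv.
Qed.
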